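(* Let $A$ be a finite set of actions and let $\{\pi_\theta\}_{\theta\in\mathbb{R}^d}$ be a family of probability distributions on $A$ with $\pi_\theta(a)>0$ and $\theta\mapsto\pi_\theta(a)$ differentiable for every $a\in A$. Let $R:A\to\mathbb{R}$ be the reward function, let $A$ also denote the random action drawn from $\pi_\theta$, and write $R=R(A)$ for the resulting reward random variable. Define the objective $\eta_s(\theta):=\mathbb{E}_{a\sim\pi_\theta}[R(a)]$, its gradient $g_s(\theta):=\nabla_\theta\eta_s(\theta)$, and the score function $S_\theta(a):=\nabla_\theta\log\pi_\theta(a)$. Assume that for all $a\in A$, $$\|S_\theta(a)\|\le G_{\max},\qquad |R(a)|\le R_{\max}.$$ Then $$\|g_s(\theta)\|\le \sqrt{2}\,G_{\max}R_{\max}\sqrt{I(A;R)},$$ where $I(A;R)$ is the mutual information between the action $A\sim\pi_\theta$ and the reward $R$.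
   Context: This is the ''one-shot game'' (horizon one): the state is fixed, the agent draws an action $a\sim\pi_\theta$ and receives reward $R(a)$. $\|\cdot\|$ is the Euclidean norm on $\mathbb{R}^d$. Mutual information is taken with the natural logarithm. *)

(* Defs.v *)
From mathcomp Require Import all_boot all_order all_algebra.
From mathcomp Require Import all_classical all_reals all_analysis.
Set Implicit Arguments. Unset Strict Implicit. Unset Printing Implicit Defensive.
Import Order.TTheory GRing.Theory Num.Theory.
Import numFieldNormedType.Exports.
Local Open Scope ring_scope.

Section Defs.
Variable R : realType.

Definition enorm (d : nat) (v : 'rV[R]_d) : R :=
  Num.sqrt (\sum_(i < d) v ord0 i ^+ 2).

Definition grad (d : nat) (f : 'rV[R]_d -> R) (theta : 'rV[R]_d) : 'rV[R]_d :=
  \row_(i < d) derive f theta (delta_mx ord0 i).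

Definition mutual_info (X Y : finType) (p : X -> Y -> R) : R :=
  \sum_(x : X) \sum_(y : Y)
     (if p x y == 0 then 0
      else p x y * ln (p x y / ((\sum_(y' : Y) p x y') * (\sum_(x' : X) p x' y)))).

Definition reward_vals (A : finType) (Rw : A -> R) := seq_sub (map Rw (enum A)).

Definition action_reward_joint (A : finType) (pi : A -> R) (Rw : A -> R)
  (a : A) (r : @reward_vals A Rw) : R :=
  pi a * (if Rw a == ssval r then 1 else 0).

Definition MI_action_reward (A : finType) (pi : A -> R) (Rw : A -> R) : R :=
  mutual_info (@action_reward_joint A pi Rw).

Definition eta_s (d : nat) (A : finType) (pi : 'rV[R]_d -> A -> R) (Rw : A -> R)
  (theta : 'rV[R]_d) : R := \sum_(a : A) pi theta a * Rw a.

Definition score (d : nat) (A : finType) (pi : 'rV[R]_d -> A -> R)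
  (theta : 'rV[R]_d) (a : A) : 'rV[R]_d :=
  grad (fun t => ln (pi t a)) theta.

End Defs.

(* Main.v *)
Require Import Defs.
From mathcomp Require Import all_boot all_order all_algebra.
From mathcomp Require Import all_classical all_reals all_analysis.
From mathcomp Require Import lra ring.
Import Order.TTheory GRing.Theory Num.Theory.
Import numFieldNormedType.Exports.
Local Open Scope ring_scope.

Section Helpers.
Variable R : realType.

Lemma is_derive_sum_seq (V : normedModType R) (A : Type) (s : seq A)
  (h : A -> V -> R) (x v : V) :
  (forall a, derivable (h a) x v) ->
  is_derive x v (fun t => \sum_(a <- s) h a t) (\sum_(a <- s) 'D_v (h a) x).
Proof.
move=> dh; elim: s => [|a s IH].
  under eq_fun do rewrite big_nil. rewrite big_nil; exact: is_derive_cst.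
under eq_fun do rewrite big_cons. rewrite big_cons.
have H1 : is_derive x v (h a) ('D_v (h a) x) by exact: derivableP.
exact: (is_deriveD H1 IH).
Qed.

Lemma ln_le_sub1 (y : R) : 0 < y -> ln y <= y - 1.
Proof.
move=> y0; have := expR_ge1Dx (ln y); rewrite lnK ?posrE //.
by move=> H; rewrite lerBrDl.
Qed.

Lemma derive_ln_comp (V : normedModType R) (f : V -> R) (x v : V) :
  0 < f x -> differentiable f x ->
  'D_v (fun t => ln (f t)) x = 'D_v f x / f x.
Proof.
move=> fx0 df.
have Hl := is_derive1_ln fx0.
have dlb : derivable (@ln R) (f x) 1 by exact: ex_derive.
have dl : differentiable (@ln R) (f x) by apply/derivable1_diffP.
have dc : differentiable (@ln R \o f) x by exact: differentiable_comp.
rewrite (deriveE v dc) diff_comp // (deriveE v df) /=.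
rewrite (deriv1E dlb) /=.
rewrite derive1E.
have -> : 'D_1 (@ln R) (f x) = (f x)^-1 by apply: derive_val.
by [].
Qed.
End Helpers.

Section CS.
Variable R : realType.

Lemma cs_sum (n : nat) (x y : 'I_n -> R) :
  (\sum_i x i * y i) ^+ 2 <= (\sum_i x i ^+ 2) * (\sum_i y i ^+ 2).
Proof.
have E1 : (\sum_i x i * y i) ^+ 2 = \sum_i \sum_j (x i * y i) * (x j * y j).
  by rewrite expr2 mulr_suml; apply: eq_bigr => i _; rewrite mulr_sumr.
have E2 : (\sum_i x i ^+ 2) * (\sum_i y i ^+ 2) = \sum_i \sum_j x i ^+ 2 * y j ^+ 2.
  by rewrite mulr_suml; apply: eq_bigr => i _; rewrite mulr_sumr.
have E3 : (\sum_i x i ^+ 2) * (\sum_i y i ^+ 2) = \sum_i \sum_j x j ^+ 2 * y i ^+ 2.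
  by rewrite E2 exchange_big.
suff : 2 * (\sum_i x i * y i) ^+ 2 <= (\sum_i x i ^+ 2) * (\sum_i y i ^+ 2) + (\sum_i x i ^+ 2) * (\sum_i y i ^+ 2).
  move=> H; rewrite -(@ler_pM2l _ 2) //; lra.
rewrite {1}E2 E3 E1 -big_split /= mulr_sumr.
apply: ler_sum => i _; rewrite mulr_sumr -big_split /=; apply: ler_sum => j _.
have := sqr_ge0 (x i * y j - x j * y i); nra.
Qed.

Lemma enorm_ge0 d (v : 'rV[R]_d) : 0 <= enorm v.
Proof. exact: sqrtr_ge0. Qed.

Lemma cs_enorm d (u v : 'rV[R]_d) :
  `|\sum_i u ord0 i * v ord0 i| <= enorm u * enorm v.
Proof.
rewrite /enorm -sqrtrM; last by apply: sumr_ge0 => i _; exact: sqr_ge0.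
rewrite -sqrtr_sqr ler_sqrt; first exact: cs_sum.
by apply: mulr_ge0; apply: sumr_ge0 => i _; exact: sqr_ge0.
Qed.

Lemma enorm_comb d (A : finType) (w : A -> R) (S : A -> 'rV[R]_d) (G : R) :
  0 <= G -> (forall a, enorm (S a) <= G) ->
  enorm (\row_i \sum_a w a * S a ord0 i) <= G * \sum_a `|w a|.
Proof.
move=> G0 HS; set v := \row_i _.
have N2 : enorm v ^+ 2 = \sum_i v ord0 i * v ord0 i.
  rewrite /enorm sqr_sqrtr; last by apply: sumr_ge0 => i _; exact: sqr_ge0.
  by apply: eq_bigr => i _; rewrite expr2.
have N2' : enorm v ^+ 2 <= enorm v * (G * \sum_a `|w a|).
  rewrite N2.
  have -> : \sum_i v ord0 i * v ord0 i = \sum_a w a * \sum_i v ord0 i * S a ord0 i.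
    rewrite (eq_bigr (fun i => \sum_a w a * (v ord0 i * S a ord0 i))); last first.
      move=> i _; rewrite {2}/v mxE mulr_sumr; apply: eq_bigr => a _.
      by rewrite mulrCA.
    by rewrite exchange_big; apply: eq_bigr => a _; rewrite mulr_sumr.
  rewrite mulr_sumr mulr_sumr.
  apply: (le_trans (ler_norm _)); apply: (le_trans (ler_norm_sum _ _ _)).
  apply: ler_sum => a _; rewrite normrM.
  rewrite [X in _ <= X](_ : _ = `|w a| * (enorm v * G)); last by ring.
  apply: ler_wpM2l; first exact: normr_ge0.
  apply: le_trans; first exact: cs_enorm.
  by apply: ler_wpM2l; [exact: enorm_ge0 | exact: HS].
have [->|Np] := eqVneq (enorm v) 0.
  by apply: mulr_ge0 => //; apply: sumr_ge0 => a _; exact: normr_ge0.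
have Npos : 0 < enorm v by rewrite lt_def Np enorm_ge0.
by move: N2'; rewrite expr2 ler_pM2l.
Qed.
End CS.

Section Main.
Variable R : realType.

Lemma is_derive_sum_seq' (V : normedModType R) (A : Type) (s : seq A)
  (h : A -> V -> R) (dh : A -> R) (x v : V) :
  (forall a, is_derive x v (h a) (dh a)) ->
  is_derive x v (fun t => \sum_(a <- s) h a t) (\sum_(a <- s) dh a).
Proof.
move=> dhh; elim: s => [|a s IH].
  under eq_fun do rewrite big_nil. rewrite big_nil; exact: is_derive_cst.
under eq_fun do rewrite big_cons. rewrite big_cons.
exact: (is_deriveD (dhh a) IH).
Qed.

Lemma derive_lin d (A : finType) (pi : 'rV[R]_d -> A -> R) (w : A -> R)
  (theta v : 'rV[R]_d) :
  (forall a t, differentiable (fun t' => pi t' a) t) ->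
  'D_v (fun t => \sum_a w a * pi t a) theta
    = \sum_a w a * 'D_v (fun t => pi t a) theta.
Proof.
move=> dif.
have H : forall a, is_derive theta v (fun t => w a * pi t a)
     (w a * 'D_v (fun t => pi t a) theta).
  move=> a.
  have Hf := derivableP (@diff_derivable _ _ _ _ theta v (dif a theta)).
  exact: (is_deriveZ (w a) Hf).
have := @is_derive_sum_seq' _ _ (index_enum A) _ _ _ _ H.
move=> HH; exact: derive_val.
Qed.
End Main.

Theorem theorem1 (R : realType) (d : nat) (A : finType)
  (pi : 'rV[R]_d -> A -> R) (Rw : A -> R) (Gmax Rmax : R) (theta : 'rV[R]_d) :
  (forall t a, 0 < pi t a) ->
  (forall t, \sum_(a : A) pi t a = 1) ->
  (forall a t, differentiable (fun t' => pi t' a) t) ->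
  (forall a, enorm (score pi theta a) <= Gmax) ->
  (forall a, `|Rw a| <= Rmax) ->
  enorm (grad (eta_s pi Rw) theta)
    <= Num.sqrt 2 * Gmax * Rmax * Num.sqrt (MI_action_reward (pi theta) Rw).
Proof.
move=> pos sum1 dif HG HR.
set p := pi theta.
have [a0 _ | H0] := pickP (fun _ : A => true); last first.
  have := sum1 theta; rewrite big1 // => [/eqP|a _]; first by rewrite eq_sym oner_eq0.
  by have := H0 a.
have G0 : 0 <= Gmax := le_trans (enorm_ge0 _ _ _) (HG a0).
have R0 : 0 <= Rmax := le_trans (normr_ge0 _) (HR a0).
pose D a i := 'D_(delta_mx ord0 i : 'rV[R]_d) (fun t => pi t a) theta.
have Dsum : forall i, \sum_a D a i = 0.
  move=> i.
  have := @derive_lin R d A pi (fun _ => 1) theta (delta_mx ord0 i) dif.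
  under [in X in X = _ -> _]eq_fun do under eq_bigr do rewrite mul1r.
  under [in X in _ = X -> _]eq_bigr do rewrite mul1r.
  move=> <-.
  have -> : (fun t => \sum_a pi t a) = cst 1 by apply: funext => t; rewrite sum1.
  exact: derive_cst.
have Deta : forall i, 'D_(delta_mx ord0 i : 'rV[R]_d) (eta_s pi Rw) theta
      = \sum_a Rw a * D a i.
  move=> i; rewrite -(@derive_lin R d A pi Rw theta _ dif).
  congr ('D_ _ _ _); apply: funext => t; rewrite /eta_s.
  by apply: eq_bigr => a _; rewrite mulrC.
have Dscore : forall a i, score pi theta a ord0 i = D a i / p a.
  move=> a i; rewrite /score /grad mxE derive_ln_comp //.
have hg : forall c, grad (eta_s pi Rw) theta
    = \row_i \sum_a (p a * (Rw a - c)) * score pi theta a ord0 i.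
  move=> c; apply/rowP => i; rewrite /grad !mxE Deta.
  have -> : \sum_a p a * (Rw a - c) * score pi theta a ord0 i
      = \sum_a Rw a * D a i - c * \sum_a D a i.
    rewrite mulr_sumr -sumrB; apply: eq_bigr => a _; rewrite Dscore.
    have pa0 : p a != 0 by rewrite gt_eqF // pos.
    by field.
  by rewrite Dsum mulr0 subr0.
have hn : forall c, enorm (grad (eta_s pi Rw) theta)
    <= Gmax * \sum_a p a * `|Rw a - c|.
  move=> c; rewrite (hg c); apply: (le_trans (@enorm_comb R d A _ _ _ G0 HG)).
  apply: ler_wpM2l => //; apply: ler_sum => a _.
  by rewrite normrM gtr0_norm // pos.
pose q (r : R) := \sum_b p b * (if Rw b == r then 1 else 0).
have qpos : forall a, 0 < q (Rw a).
  move=> a; rewrite /q (bigD1 a) //= eqxx mulr1.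
  apply: (lt_le_trans (pos theta a)); rewrite lerDl.
  apply: sumr_ge0 => b _; apply: mulr_ge0; first exact: ltW (pos _ _).
  by case: ifP.
have ina : forall a, Rw a \in map Rw (enum A) by move=> a; rewrite map_f // mem_enum.
pose r0 a : @reward_vals R A Rw := SeqSub (ina a).
have key : forall a (r : @reward_vals R A Rw), (Rw a == ssval r) = (r == r0 a).
  move=> a r; apply/eqP/eqP => [E|->//]; apply: val_inj => /=; by rewrite -E.
have hMI : MI_action_reward p Rw = \sum_a p a * ln (p a / (p a * q (Rw a))).
  rewrite /MI_action_reward /mutual_info; apply: eq_bigr => a _.
  rewrite (bigD1 (r0 a)) //= [\sum_(i | i != r0 a) _]big1 ?addr0; last first.
    move=> r neq; rewrite /action_reward_joint key (negbTE neq) mulr0.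
    by rewrite eqxx.
  rewrite /action_reward_joint /= eqxx mulr1 (gt_eqF (pos _ _)).
  rewrite (bigD1 (r0 a)) //= eqxx mulr1 big1 ?addr0 //.
  by move=> r neq; rewrite key (negbTE neq) mulr0.
have [am Hmax] : exists am, forall b, q (Rw b) <= q (Rw am).
  case: (@arg_maxP _ _ A a0 predT (fun a => q (Rw a)) isT) => am _ H.
  by exists am => b; exact: H.
set m := q (Rw am).
have m1 : m <= 1.
  rewrite /m /q -[X in _ <= X](sum1 theta); apply: ler_sum => b _.
  case: ifP => _; rewrite ?mulr1 ?mulr0 //; exact: ltW (pos _ _).
have HMI : 1 - m <= MI_action_reward p Rw.
  rewrite hMI -[1 - m]mul1r -[X in X * _](sum1 theta) mulr_suml; apply: ler_sum => a _.
  apply: ler_wpM2l; first exact: ltW (pos _ _).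
  have pa0 : p a != 0 by rewrite gt_eqF // pos.
  have qa0 : q (Rw a) != 0 by rewrite gt_eqF // qpos.
  have -> : p a / (p a * q (Rw a)) = (q (Rw a))^-1 by rewrite invfM mulrA mulfV // mul1r.
  rewrite lnV ?posrE ?qpos //.
  have := @ln_le_sub1 R _ (qpos a); have := Hmax a; rewrite /m; lra.
have hc : \sum_a p a * `|Rw a - Rw am| <= 2 * Rmax * (1 - m).
  have E : \sum_a 2 * Rmax * (p a - p a * (if Rw a == Rw am then 1 else 0))
      = 2 * Rmax * (1 - m) by rewrite -mulr_sumr sumrB sum1.
  rewrite -E; apply: ler_sum => a _; case: eqP => [->|_].
    by rewrite subrr normr0 mulr1 subrr !mulr0.
  rewrite mulr0 subr0.
  have := ler_normB (Rw a) (Rw am); have := HR a; have := HR am.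
  have := pos theta a; rewrite -/p; nra.
have h0 : \sum_a p a * `|Rw a - 0| <= Rmax.
  rewrite -[Rmax]mul1r -[X in _ <= X * _](sum1 theta) mulr_suml; apply: ler_sum => a _.
  by rewrite subr0; apply: ler_wpM2l; [exact: ltW (pos _ _) | exact: HR].
have X1 := le_trans (hn (Rw am)) (ler_wpM2l G0 hc).
have X2 := le_trans (hn 0) (ler_wpM2l G0 h0).
set X := enorm _ in X1 X2 *.
set H := MI_action_reward p Rw in HMI *.
have GR : 0 <= Gmax * Rmax by exact: mulr_ge0.
have -> : Num.sqrt 2 * Gmax * Rmax * Num.sqrt H = Gmax * Rmax * (Num.sqrt 2 * Num.sqrt H) by ring.
have [mh|ml] := lerP (2^-1) m.
  have S : 2 * (1 - m) <= Num.sqrt 2 * Num.sqrt H.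
    rewrite -sqrtrM ?ler0n // -(@ger0_norm _ (2 * (1 - m))); last lra.
    rewrite -sqrtr_sqr ler_sqrt; last lra.
    have : 0 <= (1 - m) * (2 * m - 1) by apply: mulr_ge0; lra.
    nra.
  apply: (le_trans X1).
  rewrite [X in X <= _](_ : _ = Gmax * Rmax * (2 * (1 - m))); last by ring.
  exact: ler_wpM2l.
have S : 1 <= Num.sqrt 2 * Num.sqrt H.
  rewrite -sqrtrM ?ler0n //.
  have : Num.sqrt 1 <= Num.sqrt (2 * H) by rewrite ler_sqrt; lra.
  by rewrite sqrtr1.
apply: (le_trans X2).
rewrite -[X in X <= _]mulr1.
exact: ler_wpM2l.
Qed.
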